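(* Let $\phi$ be a Drinfeld $A[\underline{t}_s]$-module over $\mathbb{T}_s$ of rank $r$ with $\phi_\theta=\theta+A_1\tau+\dots+A_r\tau^r$, $A_r\in\mathbb{T}_s^\times$. Then the de Rham module $H^*_{\mathrm{DR}}(\phi)=\mathrm{Der}(\phi)/\mathrm{Der}_{si}(\phi)$ is a free $\mathbb{T}_s$-module of rank $r$, with basis the classes of $\delta^0,\delta^1,\dots,\delta^{r-1}$, where $\delta^0_a=\phi_a-a$ for $a\in A[\underline{t}_s]$ and, for $1\le i\le r-1$, $\delta^i$ is the biderivation determined by $\delta^i_\theta=\tau^i$.
   Context: $\mathbb{F}_q$ finite field, $\theta,t_1,\dots,t_s$ independent variables, $A[\underline{t}_s]=\mathbb{F}_q[\theta,t_1,\dots,t_s]$, $\mathbb{F}_q[\underline{t}_s]=\mathbb{F}_q[t_1,\dots,t_s]$. $\mathbb{C}_\infty$: completion of an algebraic closure of $\mathbb{F}_q((1/\theta))$. $\mathbb{T}_s$: Tate algebra of power series in $t_1,\dots,t_s$ over $\mathbb{C}_\infty$ with coefficients tending to $0$. $\tau$ raises coefficients to the $q$-th power, $f^{(n)}=\tau^n(f)$; $\mathbb{T}_s[\tau]$ is the twisted polynomial ring with $\tau f=f^{(1)}\tau$. A Drinfeld $A[\underline{t}_s]$-module of rank $r$ is an $\mathbb{F}_q[\underline{t}_s]$-algebra homomorphism $\phi:A[\underline{t}_s]\to\mathbb{T}_s[\tau]$ with $\phi_\theta=\theta+A_1\tau+\dots+A_r\tau^r$, $A_r\ne0$. A biderivation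 is an $\mathbb{F}_q[\underline{t}_s]$-linear $\eta:A[\underline{t}_s]\to\tau\mathbb{T}_s[\tau]$ with $\eta_{ab}=a\eta_b+\eta_a\phi_b$ for all $a,b$; a biderivation is determined by $\eta_\theta$, and every element of $\tau\mathbb{T}_s[\tau]$ occurs as $\eta_\theta$. $\mathrm{Der}(\phi)$ is the left $\mathbb{T}_s$-module of biderivations, $(f\eta)_a=f\eta_a$. For $m\in\tau\mathbb{T}_s[\tau]$, $\eta^{\{m\}}_a=m\phi_a-am$ defines a strictly inner biderivation; $\mathrm{Der}_{si}(\phi)$ is the submodule of these. (Note $\delta^0=\eta^{\{1\}}$ is a biderivation but with $1\notin\tau\mathbb{T}_s[\tau]$.) *)

(* Defs.v *)
From mathcomp Require Import all_boot all_order all_algebra.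
Set Implicit Arguments. Unset Strict Implicit. Unset Printing Implicit Defensive.
Import GRing.Theory.
Local Open Scope ring_scope.

(* Twisted polynomials T[tau] are represented by their coefficient
   polynomial p = \sum_i p_i X^i  <->  \sum_i p_i tau^i.
   sigma plays the role of tau acting on coefficients (f^(1) = sigma f). *)

(* twisted multiplication: (p_i tau^i)(q_j tau^j) = p_i q_j^(i) tau^(i+j) *)
Definition tmul (T : comRingType) (sigma : T -> T) (p q : {poly T}) : {poly T} :=
  \sum_(i < size p) \sum_(j < size q)
     (p`_i * iter i sigma q`_j) *: 'X^(i + j).

Fixpoint tpow (T : comRingType) (sigma : T -> T) (p : {poly T}) (k : nat)
  : {poly T} :=
  match k with
  | 0 => 1
  | k'.+1 => tmul sigma (tpow sigma p k') p
  end.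

(* A[t_s] = K[theta] with K = F_q[t_s]; an element a : {poly K} is a
   polynomial in theta.  evalA a = image of a in T (a evaluated at theta). *)
Definition evalA (K : comRingType) (T : comRingType) (iota : K -> T)
  (theta : T) (a : {poly K}) : T := (map_poly iota a).[theta].

(* The Drinfeld module phi: the K-algebra map A[t_s] -> T[tau] with
   phi_theta = Phi. *)
Definition phi (K : comRingType) (T : comRingType) (iota : K -> T)
  (sigma : T -> T) (Phi : {poly T}) (a : {poly K}) : {poly T} :=
  \sum_(k < size a) tmul sigma (iota a`_k)%:P (tpow sigma Phi k).

Definition is_bider (K : comRingType) (T : comRingType) (iota : K -> T)
  (sigma : T -> T) (theta : T) (Phi : {poly T})
  (eta : {poly K} -> {poly T}) : Prop :=
  [/\ (forall a b, eta (a + b) = eta a + eta b),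
      (forall (c : K) a, eta (c *: a) = tmul sigma (iota c)%:P (eta a)),
      (forall a, (eta a)`_0 = 0) &
      (forall a b, eta (a * b) =
          tmul sigma (evalA iota theta a)%:P (eta b)
          + tmul sigma (eta a) (phi iota sigma Phi b))].

Definition is_strictly_inner (K : comRingType) (T : comRingType)
  (iota : K -> T) (sigma : T -> T) (theta : T) (Phi : {poly T})
  (eta : {poly K} -> {poly T}) : Prop :=
  exists m : {poly T}, m`_0 = 0 /\
    forall a, eta a = tmul sigma m (phi iota sigma Phi a)
                      - tmul sigma (evalA iota theta a)%:P m.

(* Main.v *)
From HB Require Import structures.
Require Import Defs.
From mathcomp Require Import all_boot all_order all_algebra.
From mathcomp Require Import ring zify.
Import GRing.Theory.
Local Open Scope ring_scope.


Section Sg.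
Variables (T : comRingType) (sigma : {rmorphism T -> T}).
Definition sg (i : nat) : T -> T := iter i sigma.
Lemma sg_is_zmod i : zmod_morphism (sg i).
Proof. by elim: i => [|i IH] x y //=; rewrite IH rmorphB. Qed.
HB.instance Definition _ i := GRing.isZmodMorphism.Build T T (sg i) (sg_is_zmod i).
Lemma sg_is_monoid i : monoid_morphism (sg i).
Proof. by elim: i => [|i IH] //=; split=> [|x y] /=; rewrite ?IH ?rmorph1 ?rmorphM //= /sg /= -/(sg i) ?IH ?rmorph1 ?rmorphM. Qed.
HB.instance Definition _ i := GRing.isMonoidMorphism.Build T T (sg i) (sg_is_monoid i).
Lemma sgD i j x : sg (i + j) x = sg i (sg j x).
Proof. exact: iterD. Qed.
Lemma sg0 x : sg 0 x = x. Proof. by []. Qed.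
Lemma sgS i x : sg i.+1 x = sigma (sg i x). Proof. by []. Qed.
Lemma sg_fix c : sigma c = c -> forall i, sg i c = c.
Proof. by move=> h; elim=> //= i IH; rewrite /sg /= -/(sg i) IH h. Qed.
Lemma map_sg_comp i j q : map_poly (sg i) (map_poly (sg j) q) = map_poly (sg (i + j)) q.
Proof. by rewrite -map_poly_comp; apply: eq_map_poly => x /=; rewrite sgD. Qed.
End Sg.
Arguments sg {T}.


Section Tw.
Variables (T : comRingType) (sigma : {rmorphism T -> T}).
Local Notation tm := (tmul sigma).
Local Notation ms i q := (map_poly (sg sigma i) q).

Lemma tmulE p q : tm p q = \sum_(i < size p) p`_i *: ('X^i * ms i q).
Proof.
rewrite /tmul; apply: eq_bigr => i _.
rewrite /map_poly poly_def mulr_sumr scaler_sumr; apply: eq_bigr => j _.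
by rewrite -scalerAr scalerA exprD.
Qed.

Lemma tmul_wide n (p q : {poly T}) : (size p <= n)%N ->
  tm p q = \sum_(i < n) p`_i *: ('X^i * ms i q).
Proof.
move=> hn; rewrite tmulE (big_ord_widen n (fun i => p`_i *: ('X^i * ms i q)) hn).
rewrite big_mkcond; apply: eq_bigr => i _; case: ifP => // /negbT.
by rewrite -leqNgt => h; rewrite nth_default // scale0r.
Qed.

Lemma tmulDl p p' q : tm (p + p') q = tm p q + tm p' q.
Proof.
set n := maxn (size p) (size p').
rewrite (@tmul_wide n (p + p')) ?(leq_trans (size_polyD _ _)) //.
rewrite (@tmul_wide n p) ?leq_maxl // (@tmul_wide n p') ?leq_maxr //.
by rewrite -big_split; apply: eq_bigr => i _; rewrite coefD scalerDl.
Qed.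

Lemma tmulZl c p q : tm (c *: p) q = c *: tm p q.
Proof.
rewrite (@tmul_wide (size p) (c *: p)) ?size_scale_leq // tmulE scaler_sumr.
by apply: eq_bigr => i _; rewrite coefZ scalerA.
Qed.

Lemma tmul0l q : tm 0 q = 0.
Proof. by have := tmulZl 0 0 q; rewrite !scale0r. Qed.

Lemma tmulNl p q : tm (- p) q = - tm p q.
Proof. by rewrite -scaleN1r tmulZl scaleN1r. Qed.

Lemma tmulBl p p' q : tm (p - p') q = tm p q - tm p' q.
Proof. by rewrite tmulDl tmulNl. Qed.

Lemma tmul_suml (I : Type) (r : seq I) (P : pred I) (F : I -> {poly T}) q :
  tm (\sum_(i <- r | P i) F i) q = \sum_(i <- r | P i) tm (F i) q.
Proof. exact: (big_morph (fun p => tm p q) (fun x y => tmulDl x y q) (tmul0l q)). Qed.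

Lemma tmulDr p q q' : tm p (q + q') = tm p q + tm p q'.
Proof.
by rewrite !tmulE -big_split; apply: eq_bigr => i _; rewrite rmorphD mulrDr scalerDr.
Qed.

Lemma tmul0r p : tm p 0 = 0.
Proof. by rewrite tmulE big1 // => i _; rewrite rmorph0 mulr0 scaler0. Qed.

Lemma tmulNr p q : tm p (- q) = - tm p q.
Proof. by apply/eqP; rewrite -subr_eq0 opprK -tmulDr addNr tmul0r. Qed.

Lemma tmulBr p q q' : tm p (q - q') = tm p q - tm p q'.
Proof. by rewrite tmulDr tmulNr. Qed.

Lemma tmul_sumr (I : Type) (r : seq I) (P : pred I) (F : I -> {poly T}) p :
  tm p (\sum_(i <- r | P i) F i) = \sum_(i <- r | P i) tm p (F i).
Proof. exact: (big_morph (fun q => tm p q) (fun x y => tmulDr p x y) (tmul0r p)). Qed.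

Lemma tmulZr_fix c p q : sigma c = c -> tm p (c *: q) = c *: tm p q.
Proof.
move=> hc; rewrite !tmulE scaler_sumr; apply: eq_bigr => i _.
rewrite map_polyZ /= sg_fix //. by rewrite -scalerAr !scalerA mulrC.
Qed.

Lemma tmul1r p : tm p 1 = p.
Proof.
rewrite tmulE -[RHS]coefK poly_def; apply: eq_bigr => i _.
by rewrite rmorph1 mulr1.
Qed.

Lemma tmulCl c q : tm c%:P q = c *: q.
Proof.
rewrite (@tmul_wide 1) ?size_polyC_leq1 // big_ord1 /= coefC /= expr0 mul1r.
congr (_ *: _); apply/polyP => j; by rewrite coef_map.
Qed.

Lemma tmul1l q : tm 1 q = q.
Proof. by rewrite -polyC1 tmulCl scale1r. Qed.

Lemma tmul_mono a b i j :
  tm (a *: 'X^i) (b *: 'X^j) = (a * sg sigma i b) *: 'X^(i + j).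
Proof.
rewrite (@tmul_wide i.+1) ?(leq_trans (size_scale_leq _ _)) ?size_polyXn //.
rewrite big_ord_recr /= big1 => [|k _]; last first.
  by rewrite coefZ coefXn /= (ltn_eqF (ltn_ord k)) mulr0 scale0r.
rewrite add0r coefZ coefXn eqxx mulr1 map_polyZ map_polyXn -scalerAr scalerA.
by rewrite exprD.
Qed.

Lemma poly_sum (p : {poly T}) : p = \sum_(i < size p) p`_i *: 'X^i.
Proof. by rewrite -poly_def coefK. Qed.

Local Opaque tmul.
Lemma tmulA_m1 a i b j s :
  tm (tm (a *: 'X^i) (b *: 'X^j)) s = tm (a *: 'X^i) (tm (b *: 'X^j) s).
Proof.
rewrite (poly_sum s) [tm (b *: 'X^j) _]tmul_sumr [RHS]tmul_sumr [LHS]tmul_sumr.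
apply: eq_bigr => l _.
by rewrite !tmul_mono addnA rmorphM /= mulrA sgD.
Qed.

Lemma tmulA_m2 a i q s :
  tm (tm (a *: 'X^i) q) s = tm (a *: 'X^i) (tm q s).
Proof.
rewrite (poly_sum q) [tm (a *: 'X^i) (\sum_(j < size q) _)]tmul_sumr [LHS]tmul_suml.
rewrite [tm (\sum_(j < size q) _) s]tmul_suml [RHS]tmul_sumr.
by apply: eq_bigr => j _; rewrite tmulA_m1.
Qed.

Lemma tmulA p q s : tm (tm p q) s = tm p (tm q s).
Proof.
rewrite (poly_sum p) [tm (\sum_(i < size p) _) q]tmul_suml.
rewrite [tm (\sum_(i < size p) _) s]tmul_suml [tm (\sum_(i < size p) _) (tm q s)]tmul_suml.
by apply: eq_bigr => i _; rewrite tmulA_m2.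
Qed.

Lemma coef_tmul_wide n (p q : {poly T}) k : (size p <= n)%N ->
  (tm p q)`_k = \sum_(i < n) p`_i * (if (k < i)%N then 0 else sg sigma i q`_(k - i)).
Proof.
move=> hn; rewrite (tmul_wide n p q hn) coef_sum; apply: eq_bigr => i _.
by rewrite coefZ coefXnM coef_map.
Qed.

Lemma coef0_tmul p q : (tm p q)`_0 = p`_0 * q`_0.
Proof.
rewrite (@coef_tmul_wide (size p).+1) // big_ord_recl /= big1 ?addr0 //.
by move=> i _; rewrite mulr0.
Qed.

Lemma coef_tmul_top (p q : {poly T}) k r n :
  (forall i, (k < i)%N -> p`_i = 0) -> (forall j, (r < j)%N -> q`_j = 0) ->
  (k + r <= n)%N -> (tm p q)`_n = p`_k * sg sigma k q`_(n - k).
Proof.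
move=> hp hq hn.
rewrite (@coef_tmul_wide (maxn (size p) k.+1)) ?leq_maxl //.
have hk : (k < maxn (size p) k.+1)%N by rewrite leq_max ltnSn orbT.
rewrite (bigD1 (Ordinal hk)) //= big1 ?addr0.
  by rewrite ltnNge (leq_trans (leq_addr r k) hn).
move=> i /eqP hik.
have hik' : (i : nat) <> k by move=> e; apply: hik; apply: val_inj.
case: (ltngtP k i) => h; first by rewrite hp // mul0r.
  case: ifP => _; first by rewrite mulr0.
  by rewrite hq ?rmorph0 ?mulr0 //; apply/ltP; move/ltP: h; move/leP: hn; lia.
by case: hik'.
Qed.
End Tw.


Section Phi.
Variables (K : comRingType) (T : comRingType) (iota : {rmorphism K -> T})
  (sigma : {rmorphism T -> T}) (theta : T) (Phi : {poly T}).
Hypothesis Hfix : forall c : K, sigma (iota c) = iota c.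
Hypothesis HPhi0 : Phi`_0 = theta.
Local Notation tm := (tmul sigma).
Local Notation ev := (evalA iota theta).
Local Notation P := (tpow sigma Phi).
Local Notation ph := (phi iota sigma Phi).

Lemma evalAD a b : ev (a + b) = ev a + ev b.
Proof. by rewrite /evalA rmorphD hornerD. Qed.
Lemma evalAM a b : ev (a * b) = ev a * ev b.
Proof. by rewrite /evalA rmorphM hornerM. Qed.
Lemma evalAC c : ev c%:P = iota c.
Proof. by rewrite /evalA map_polyC hornerC. Qed.
Lemma evalA1 : ev 1 = 1.
Proof. by rewrite -polyC1 evalAC rmorph1. Qed.
Lemma evalAX : ev 'X = theta.
Proof. by rewrite /evalA map_polyX hornerX. Qed.
Lemma evalAZ c a : ev (c *: a) = iota c * ev a.
Proof. by rewrite -mul_polyC evalAM evalAC. Qed.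
Lemma evalAB a b : ev (a - b) = ev a - ev b.
Proof. by rewrite /evalA rmorphB hornerD hornerN. Qed.

Lemma evalAE n (a : {poly K}) : (size a <= n)%N -> ev a = \sum_(k < n) iota a`_k * theta ^+ k.
Proof.
move=> hn; rewrite /evalA (@horner_coef_wide _ n); last first.
  by apply: leq_trans hn; rewrite /map_poly size_poly.
by apply: eq_bigr => k _; rewrite coef_map.
Qed.

Lemma phiE (a : {poly K}) : ph a = \sum_(k < size a) iota a`_k *: P k.
Proof. by rewrite /phi; apply: eq_bigr => k _; rewrite tmulCl. Qed.

Lemma phi_wide n (a : {poly K}) : (size a <= n)%N -> ph a = \sum_(k < n) iota a`_k *: P k.
Proof.
move=> hn; rewrite phiE (big_ord_widen n (fun k => iota a`_k *: P k) hn).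
rewrite big_mkcond; apply: eq_bigr => i _; case: ifP => // /negbT.
by rewrite -leqNgt => h; rewrite nth_default // rmorph0 scale0r.
Qed.

Lemma phiD a b : ph (a + b) = ph a + ph b.
Proof.
set n := maxn (size a) (size b).
rewrite (@phi_wide n (a + b)) ?(leq_trans (size_polyD _ _)) //.
rewrite (@phi_wide n a) ?leq_maxl // (@phi_wide n b) ?leq_maxr //.
by rewrite -big_split; apply: eq_bigr => i _; rewrite coefD rmorphD scalerDl.
Qed.

Lemma phiZ c a : ph (c *: a) = iota c *: ph a.
Proof.
rewrite (@phi_wide (size a) (c *: a)) ?size_scale_leq // phiE scaler_sumr.
by apply: eq_bigr => i _; rewrite coefZ rmorphM scalerA.
Qed.

Lemma phi0 : ph 0 = 0.
Proof. by rewrite phiE size_poly0 big_ord0. Qed.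

Lemma phiN a : ph (- a) = - ph a.
Proof. by rewrite -scaleN1r phiZ rmorphN rmorph1 scaleN1r. Qed.

Lemma phiB a b : ph (a - b) = ph a - ph b.
Proof. by rewrite phiD phiN. Qed.

Lemma phiC c : ph c%:P = (iota c)%:P.
Proof.
rewrite (@phi_wide 1) ?size_polyC_leq1 // big_ord1 /= coefC /=.
by rewrite -mul_polyC mulr1.
Qed.

Lemma phi1 : ph 1 = 1.
Proof. by rewrite -polyC1 phiC rmorph1. Qed.

Lemma P1 : P 1 = Phi.
Proof. by rewrite /= tmul1l. Qed.

Lemma phiX : ph 'X = Phi.
Proof.
rewrite phiE size_polyX big_ord_recr big_ord1 /= !coefX /= rmorph0 rmorph1.
by rewrite scale0r add0r scale1r tmul1l.
Qed.

Lemma phiMX a : ph (a * 'X) = tm (ph a) Phi.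
Proof.
rewrite (@phi_wide (size a).+1); last first.
  by apply: leq_trans (size_polyMleq _ _) _; rewrite size_polyX addn2.
rewrite big_ord_recl /= coefMX /= rmorph0 scale0r add0r phiE tmul_suml.
by apply: eq_bigr => k _; rewrite coefMX /= tmulZl.
Qed.

Lemma tmul_iotar p c : tm p (iota c)%:P = iota c *: p.
Proof. by rewrite -[(iota c)%:P]mulr1 mul_polyC tmulZr_fix // tmul1r. Qed.

Lemma phiM a b : ph (a * b) = tm (ph a) (ph b).
Proof.
elim/poly_ind: b => [|b c IH]; first by rewrite mulr0 phi0 tmul0r.
rewrite mulrDr mulrA -[a * c%:P]mulrC mul_polyC phiD phiMX IH phiZ.
by rewrite phiD phiMX phiC tmulDr tmulA tmul_iotar.
Qed.

Lemma coef0_P k : (P k)`_0 = theta ^+ k.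
Proof.
elim: k => [|k IH] /=; first by rewrite coef1.
by rewrite coef0_tmul IH HPhi0 exprSr.
Qed.

Lemma coef0_phi a : (ph a)`_0 = ev a.
Proof.
rewrite phiE (@evalAE (size a) a (leqnn _)) coef_sum; apply: eq_bigr => k _.
by rewrite coefZ coef0_P.
Qed.

End Phi.


Section Bider.
Variables (K : comRingType) (T : comRingType) (iota : {rmorphism K -> T})
  (sigma : {rmorphism T -> T}) (theta : T) (Phi : {poly T}).
Hypothesis Hfix : forall c : K, sigma (iota c) = iota c.
Hypothesis HPhi0 : Phi`_0 = theta.
Local Notation tm := (tmul sigma).
Local Notation ev := (evalA iota theta).
Local Notation ph := (phi iota sigma Phi).
Local Notation bider := (is_bider iota sigma theta Phi).

Lemma bider_ext f g : (forall a, f a = g a) -> bider f -> bider g.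
Proof.
move=> e [hD hZ h0 hM]; split=> [a b|c a|a|a b]; rewrite -!e.
- exact: hD. - exact: hZ. - exact: h0. - exact: hM.
Qed.

Lemma bider_sub f g : bider f -> bider g -> bider (fun a => f a - g a).
Proof.
move=> [hD hZ h0 hM] [hD' hZ' h0' hM']; split=> [a b|c a|a|a b].
- by rewrite hD hD' opprD addrACA.
- by rewrite hZ hZ' !tmulCl scalerBr.
- by rewrite coefB h0 h0' subr0.
- by rewrite hM hM' !tmulCl tmulBl scalerBr opprD addrACA.
Qed.

Lemma bider_scale c f : bider f -> bider (fun a => tm c%:P (f a)).
Proof.
move=> [hD hZ h0 hM]; split=> [a b|d a|a|a b].
- by rewrite hD tmulDr.
- by rewrite hZ !tmulCl !scalerA mulrC.
- by rewrite tmulCl coefZ h0 mulr0.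
- by rewrite hM !tmulCl tmulZl scalerDr !scalerA mulrC.
Qed.

Lemma bider_sum n (F : 'I_n -> {poly K} -> {poly T}) :
  (forall i, bider (F i)) -> bider (fun a => \sum_(i < n) F i a).
Proof.
move=> h; split=> [a b|c a|a|a b].
- by rewrite -big_split; apply: eq_bigr => i _; case: (h i) => ->.
- rewrite tmulCl scaler_sumr; apply: eq_bigr => i _.
  by case: (h i) => _ -> _ _; rewrite tmulCl.
- by rewrite coef_sum big1 // => i _; case: (h i).
- rewrite tmulCl scaler_sumr tmul_suml -big_split; apply: eq_bigr => i _.
  by case: (h i) => _ _ _ ->; rewrite tmulCl.
Qed.

Lemma bider_delta0 : bider (fun a => ph a - (ev a)%:P).
Proof.
split=> [a b|c a|a|a b].
- by rewrite phiD evalAD polyCD opprD addrACA.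
- by rewrite phiZ evalAZ polyCM mul_polyC tmulCl scalerBr.
- by rewrite coefB (@coef0_phi _ _ _ _ _ _ HPhi0) coefC subrr.
- rewrite phiM; [|done]. rewrite (@evalAM _ _ iota theta a b) !tmulCl tmulBl tmulCl !scalerBr -!mul_polyC polyCM.
  ring.
Qed.

Lemma bider_inner (m : {poly T}) : m`_0 = 0 ->
  bider (fun a => tm m (ph a) - tm (ev a)%:P m).
Proof.
move=> hm; split=> [a b|c a|a|a b].
- by rewrite phiD tmulDr evalAD polyCD tmulDl opprD addrACA.
- by rewrite phiZ tmulZr_fix // !tmulCl evalAZ -scalerA scalerBr.
- by rewrite coefB coef0_tmul hm mul0r tmulCl coefZ hm mulr0 subr0.
- rewrite phiM; [|done]. rewrite (@evalAM _ _ iota theta a b) !tmulCl tmulBl tmulZl tmulA scalerBr scalerA.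
  rewrite -!mul_polyC; ring.
Qed.

Lemma bider_unique e : bider e -> e 'X = 0 -> forall a, e a = 0.
Proof.
move=> [hD hZ h0 hM] eX.
have e0 : e 0 = 0 by apply: (addrI (e 0)); rewrite -hD !addr0.
have e1 : e 1 = 0.
  apply: (addrI (e 1)); rewrite addr0.
  have := hM 1 1; rewrite mulr1 evalA1 polyC1 tmul1l phi1 tmul1r => h.
  by rewrite -h.
have eC c : e c%:P = 0.
  by rewrite -[c%:P]mulr1 mul_polyC hZ e1 tmul0r.
elim/poly_ind => [|p c IH]; first exact: e0.
by rewrite hD hM IH eX eC tmul0r tmul0l !addr0.
Qed.
End Bider.


Lemma sg_unit (T : comUnitRingType) (sigma : {rmorphism T -> T}) k (x : T) :
  x \is a GRing.unit -> sg sigma k x \is a GRing.unit.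
Proof.
move=> /unitrP [y [h1 h2]]; apply/unitrP; exists (sg sigma k y).
by rewrite -!rmorphM /= h1 h2 rmorph1.
Qed.

Lemma coef_comb (T : comRingType) (Phi : {poly T}) (theta : T) r
  (c : nat -> T) (d : nat -> {poly T}) n :
  (0 < r)%N -> d 0%N = Phi - theta%:P -> (forall i, (0 < i < r)%N -> d i = 'X^i) ->
  (\sum_(i < r) c i *: d i)`_n =
    c 0%N * (Phi`_n - (if n == 0%N then theta else 0)) +
    (if (0 < n < r)%N then c n else 0).
Proof.
case: r => // r' _ hd0 hdi.
rewrite big_ord_recl /= hd0 coefD coefZ coefB coefC; congr (_ + _).
rewrite coef_sum.
have hb (i : nat) : bump 0 i = i.+1 by rewrite /bump leq0n add1n.
case: n => [|n'].
  rewrite big1 //.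
  move=> i _; rewrite hb hdi /=; last by rewrite ltnS ltn_ord.
  by rewrite coefZ coefXn /= mulr0.
rewrite (eq_bigr (fun i : 'I_r' => if (i : nat) == n' then c n'.+1 else 0)); last first.
  move=> i _; rewrite hb hdi /=; last by rewrite ltnS ltn_ord.
  rewrite coefZ coefXn eqSS eq_sym; case: eqP => [->|_]; by rewrite ?mulr1 ?mulr0.
by rewrite -big_mkcond /= (big_ord1_eq _ (fun _ => c n'.+1) n' r') ltnS.
Qed.

Section Reduce.
Variables (T : comUnitRingType) (sigma : {rmorphism T -> T}) (theta : T)
  (Phi : {poly T}) (r : nat).
Hypothesis hsize : size Phi = r.+1.
Hypothesis hunit : Phi`_r \is a GRing.unit.
Hypothesis hr : (0 < r)%N.
Local Notation tm := (tmul sigma).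

Lemma Phi_hi j : (r < j)%N -> Phi`_j = 0.
Proof. by move=> h; rewrite nth_default // hsize. Qed.

Lemma reduce N : forall e : {poly T}, (forall n, (N <= n)%N -> e`_n = 0) ->
  exists m : {poly T}, m`_0 = 0 /\
    forall n, (r < n)%N -> (e - (tm m Phi - theta *: m))`_n = 0.
Proof.
elim: N => [|N IH] e he.
  exists 0; split; first by rewrite coef0.
  by move=> n _; rewrite tmul0l scaler0 subr0 subr0 he.
case: (leqP N r) => hNr.
  exists 0; split; first by rewrite coef0.
  move=> n hn; rewrite tmul0l scaler0 subr0 subr0 he //.
  exact: leq_ltn_trans hNr hn.
pose k := (N - r)%N.
have hk : (0 < k)%N by rewrite subn_gt0.
have hkN : (k + r = N)%N by rewrite /k subnK // ltnW.
pose s := sg sigma k Phi`_r.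
have hs : s \is a GRing.unit by apply: sg_unit.
pose u := e`_N / s.
pose m1 := u *: 'X^k.
have m1hi i : (k < i)%N -> m1`_i = 0.
  by move=> h; rewrite coefZ coefXn gtn_eqF // mulr0.
pose e' := e - (tm m1 Phi - theta *: m1).
have he' : forall n, (N <= n)%N -> e'`_n = 0.
  move=> n hn.
  have hkn : (k < n)%N by clearbody k; lia.
  rewrite /e' coefB coefB coefZ (m1hi n hkn).
  rewrite (@coef_tmul_top _ sigma m1 Phi k r n m1hi Phi_hi); last by rewrite hkN.
  rewrite coefZ coefXn eqxx mulr1 mulr0 subr0.
  case: (ltnP N n) => h.
    rewrite he // Phi_hi ?rmorph0 ?mulr0 ?subr0 //.
    by clearbody k; lia.
  have -> : n = N by apply/eqP; rewrite eqn_leq h hn.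
  have -> : (N - k = r)%N by clearbody k; lia.
  by rewrite /u divrK // subrr.
have [m2 [m20 hm2]] := IH e' he'.
exists (m1 + m2); split.
  by rewrite coefD m20 addr0 coefZ coefXn eq_sym gtn_eqF // mulr0.
move=> n hn.
have -> : e - (tm (m1 + m2) Phi - theta *: (m1 + m2)) = e' - (tm m2 Phi - theta *: m2).
  by rewrite /e' tmulDl scalerDr -!mul_polyC; ring.
exact: hm2.
Qed.
End Reduce.


Theorem corollary5p4 (K : comRingType) (T : comUnitRingType)
  (iota : {rmorphism K -> T}) (sigma : {rmorphism T -> T})
  (theta : T) (r : nat) (Phi : {poly T})
  (delta : nat -> {poly K} -> {poly T}) :
  (forall c : K, sigma (iota c) = iota c) ->
  (0 < r)%N ->
  Phi`_0 = theta ->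
  size Phi = r.+1 ->
  lead_coef Phi \is a GRing.unit ->
  (forall a, delta 0%N a = phi iota sigma Phi a - (evalA iota theta a)%:P) ->
  (forall i, (0 < i < r)%N ->
     is_bider iota sigma theta Phi (delta i) /\ delta i 'X = 'X^i) ->
  [/\ is_bider iota sigma theta Phi (delta 0%N),
      (forall eta, is_bider iota sigma theta Phi eta ->
         exists c : nat -> T,
           is_strictly_inner iota sigma theta Phi
             (fun a => eta a - \sum_(i < r) tmul sigma (c i)%:P (delta i a)))
    & (forall c : nat -> T,
         is_strictly_inner iota sigma theta Phi
           (fun a => \sum_(i < r) tmul sigma (c i)%:P (delta i a)) ->
         forall i, (i < r)%N -> c i = 0)].
Proof.
move=> Hfix hr HPhi0 hsize hlc hd0 hdi.
have hunit : Phi`_r \is a GRing.unit by rewrite lead_coefE hsize in hlc.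
have Hbd0 : is_bider iota sigma theta Phi (delta 0%N).
  apply: (@bider_ext _ _ iota sigma theta Phi (fun a => phi iota sigma Phi a - (evalA iota theta a)%:P)).
    by move=> a; rewrite hd0.
  exact: bider_delta0.
have Hbd i : (i < r)%N -> is_bider iota sigma theta Phi (delta i).
  case: i => [|i] hi; first exact: Hbd0.
  by case: (hdi i.+1 hi).
have dX0 : delta 0%N 'X = Phi - theta%:P.
  by rewrite hd0 phiX evalAX.
have dXi i : (0 < i < r)%N -> delta i 'X = 'X^i by move=> h; case: (hdi i h).
have hcomb (c : nat -> T) n :
  (\sum_(i < r) tmul sigma (c i)%:P (delta i 'X))`_n =
    c 0%N * (Phi`_n - (if n == 0%N then theta else 0)) +
    (if (0 < n < r)%N then c n else 0).
  rewrite (eq_bigr (fun i : 'I_r => c i *: delta i 'X)); last by move=> i _; rewrite tmulCl.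
  exact: (@coef_comb _ Phi theta r c (fun i => delta i 'X) n hr dX0 dXi).
split.
- exact: Hbd0.
- move=> eta Heta.
  pose e := eta 'X.
  have [m [m0 hm]] := @reduce T sigma theta Phi r hsize hunit hr (size e) e
    (fun n hn => nth_default 0 hn).
  pose R := e - (tmul sigma m Phi - theta *: m).
  have hR0 : R`_0 = 0.
    case: Heta => _ _ h0 _.
    by rewrite /R coefB coefB coef0_tmul m0 mul0r coefZ m0 mulr0 subr0 /e h0 subr0.
  pose c0 := R`_r / Phi`_r.
  pose cc := fun i => if i == 0%N then c0 else R`_i - c0 * Phi`_i.
  exists cc, m; split => // a.
  pose D := fun a => (eta a - \sum_(i < r) tmul sigma (cc i)%:P (delta i a))
     - (tmul sigma m (phi iota sigma Phi a) - tmul sigma (evalA iota theta a)%:P m).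
  have HD : is_bider iota sigma theta Phi D.
    apply: (@bider_sub _ _ iota sigma theta Phi
      (fun a => eta a - \sum_(i < r) tmul sigma (cc i)%:P (delta i a))).
      apply: bider_sub => //.
      apply: (@bider_sum _ _ iota sigma theta Phi r
         (fun (i : 'I_r) a => tmul sigma (cc i)%:P (delta i a))) => i.
      by apply: bider_scale; apply: Hbd.
    exact: bider_inner.
  have hsum : \sum_(i < r) tmul sigma (cc i)%:P (delta i 'X) = R.
    apply/polyP => n; rewrite hcomb.
    have [->|n0] := eqVneq n 0%N.
      by rewrite /= HPhi0 subrr mulr0 add0r hR0.
    rewrite subr0.
    case: (ltngtP n r) => hnr.
    - rewrite lt0n n0 /=.
      by rewrite /cc (negbTE n0) addrC subrK.
    - rewrite andbF (@Phi_hi _ _ _ hsize) // mulr0 addr0 hm //.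
    - by rewrite hnr andbF addr0 /c0 divrK.
  apply: subr0_eq.
  have := @bider_unique _ _ iota sigma theta Phi D HD; rewrite /D => -> //.
  rewrite phiX evalAX tmulCl hsum /R /e -!mul_polyC; ring.
- move=> c [m [m0 hm]] i hi.
  have hX := hm 'X; rewrite /= phiX evalAX tmulCl in hX.
  have mz : m = 0.
    apply/eqP; apply/negPn/negP => mn0.
    have hsm : (1 < size m)%N.
      rewrite ltnNge; apply/negP => h; move/negP: mn0; apply.
      by rewrite (size1_polyC h) m0 eqxx.
    pose k := (size m).-1.
    have hmhi j : (k < j)%N -> m`_j = 0.
      by move=> h; rewrite nth_default // -(prednK (ltnW hsm)); exact: h.
    have hsk : sg sigma k Phi`_r \is a GRing.unit by apply: sg_unit.
    have hPkr : Phi`_(k + r) = 0 by apply: (@Phi_hi _ _ _ hsize); lia.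
    have hmkr : m`_(k + r) = 0 by apply: hmhi; lia.
    have htop := @coef_tmul_top _ sigma m Phi k r (k + r)%N hmhi
      (@Phi_hi T Phi r hsize) (leqnn _).
    rewrite addKn in htop.
    have := congr1 (fun p : {poly T} => p`_(k + r)) hX.
    rewrite /= hcomb coefB coefZ hmkr hPkr htop.
    have -> : (0 < k + r < r)%N = false by lia.
    have -> : (k + r == 0)%N = false by lia.
    rewrite !(subr0, mulr0, addr0) => /esym hmk.
    have : m`_k = 0 by rewrite -(mulrK hsk m`_k) hmk mul0r.
    move/eqP; rewrite -lead_coefE lead_coef_eq0; exact/negP.
  rewrite mz tmul0l scaler0 subr0 in hX.
  have hc n := congr1 (fun p : {poly T} => p`_n) hX.
  have c00 : c 0%N = 0.
    have := hc r; rewrite /= hcomb coef0 (gtn_eqF hr) subr0 ltnn andbF addr0.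
    by move=> h; rewrite -(mulrK hunit (c 0%N)) h mul0r.
  case: i hi => [|i] hi; first exact: c00.
  have := hc i.+1; rewrite /= hcomb coef0 c00 mul0r add0r.
  by rewrite hi.
Qed.
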